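(* Let $\mathcal A$ and $\mathcal B$ be Fréchet algebras, let $I$ be a closed ideal of $\mathcal A$ and $J$ a closed ideal of $\mathcal B$. Suppose that $\mathcal A$ is amenable modulo $I$, and that $\varphi:\mathcal A\to\mathcal B$ is a continuous homomorphism with dense range such that $\varphi(I)\subseteq J$. Then $\mathcal B$ is amenable modulo $J$.
   Context: A Fréchet algebra $(\mathcal A,p_n)_{n\in\mathbb N}$ is a complete topological algebra whose topology is given by a countable increasing family of submultiplicative seminorms $p_n$. For a Fréchet algebra $\mathcal A$, a Banach $\mathcal A$-bimodule is a Banach space $E$ with an $\mathcal A$-bimodule structure whose module actions are separately continuous; $E^*$ is then a dual bimodule in the usual way. A continuous derivation $D:\mathcal A\to E^*$ is a continuous linear map with $D(ab)=a.D(b)+D(a).b$. For a closed ideal $I$ of a Fréchet algebra $\mathcal A$, $\mathcal A$ is called amenable modulo $I$ if for every Banach $\mathcal A$-bimodule $E$ with $E.I=I.E=0$ and every continuous derivation $D:\mathcal A\to E^*$ there exists $\eta\in E^*$ with $D(a)=a.\eta-\eta.a$ for all $a\in\mathcal A\setminus I$. *)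

(* Defs.v *)
From HB Require Import structures.
From mathcomp Require Import all_boot all_order all_algebra.
From mathcomp Require Import boolp classical_sets topology normedtype.
Set Implicit Arguments. Unset Strict Implicit. Unset Printing Implicit Defensive.
Import Order.TTheory GRing.Theory Num.Theory numFieldNormedType.Exports.
Local Open Scope classical_set_scope.
Local Open Scope ring_scope.

(* Scalars: an arbitrary numFieldType K (covers R and C).
   Seminorms and norms take values in K (nonnegative), as for mathcomp norms. *)

Section Frechet.
Variable K : numFieldType.

(* Continuity (epsilon-delta) of a map between spaces whose topologies are
   given by INCREASING countable families of seminorms p (on X), q (on Y). *)
Definition sn_continuous (X Y : zmodType) (p : nat -> X -> K) (q : nat -> Y -> K)
  (f : X -> Y) : Prop :=
  forall (x : X) (m : nat) (eps : K), 0 < eps ->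
    exists n : nat, exists2 delta : K, 0 < delta &
      forall y : X, p n (y - x) < delta -> q m (f y - f x) < eps.

Definition is_frechet_algebra (A : lmodType K) (mul : A -> A -> A)
  (p : nat -> A -> K) : Prop :=
  [/\ [/\ (forall a b c, mul a (mul b c) = mul (mul a b) c),
      (forall (k : K) a b c, mul (k *: a + b) c = k *: mul a c + mul b c) &
      (forall (k : K) a b c, mul a (k *: b + c) = k *: mul a b + mul a c)],
      [/\ (forall n x, 0 <= p n x),
      (forall n x y, p n (x + y) <= p n x + p n y),
      (forall n (k : K) x, p n (k *: x) = `|k| * p n x),
      (forall n x y, p n (mul x y) <= p n x * p n y) &
      (forall n x, p n x <= p n.+1 x)],
      (forall x, (forall n, p n x = 0) -> x = 0) &
      (forall u : nat -> A,
        (forall n (eps : K), 0 < eps -> exists N, forall i j, (N <= i)%N -> (N <= j)%N ->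
            p n (u i - u j) < eps) ->
        exists l : A, forall n (eps : K), 0 < eps -> exists N, forall i, (N <= i)%N ->
            p n (u i - l) < eps)].

Definition closed_ideal (A : lmodType K) (mul : A -> A -> A)
  (p : nat -> A -> K) (I : set A) : Prop :=
  [/\ I 0,
      (forall (k : K) x y, I x -> I y -> I (k *: x + y)),
      (forall a x, I x -> I (mul a x) /\ I (mul x a)) &
      (forall x, (forall n (eps : K), 0 < eps -> exists2 y, I y & p n (x - y) < eps) -> I x)].

Definition normfam (E : normedModType K) : nat -> E -> K := fun _ x => `|x|.
Arguments normfam : clear implicits.

(* Banach A-bimodule structure (lact : a.x, ract : x.a) on the Banach space E,
   with separately continuous module actions. *)
Definition banach_bimodule (A : lmodType K) (mul : A -> A -> A)
  (p : nat -> A -> K) (E : completeNormedModType K)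
  (lact : A -> E -> E) (ract : E -> A -> E) : Prop :=
  [/\ (forall (k : K) a b x, lact (k *: a + b) x = k *: lact a x + lact b x)
      /\ (forall (k : K) a x y, lact a (k *: x + y) = k *: lact a x + lact a y),
      (forall (k : K) a b x, ract x (k *: a + b) = k *: ract x a + ract x b)
      /\ (forall (k : K) a x y, ract (k *: x + y) a = k *: ract x a + ract y a),
      [/\ (forall a b x, lact (mul a b) x = lact a (lact b x)),
          (forall a b x, ract x (mul a b) = ract (ract x a) b) &
          (forall a b x, lact a (ract x b) = ract (lact a x) b)],
      (forall a, sn_continuous (normfam E) (normfam E) (lact a))
      /\ (forall x, sn_continuous p (normfam E) (fun a => lact a x)) &
      (forall a, sn_continuous (normfam E) (normfam E) (fun x => ract x a))
      /\ (forall x, sn_continuous p (normfam E) (fun a => ract x a))].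

Definition in_dual (E : normedModType K) (f : E -> K) : Prop :=
  (forall (k : K) x y, f (k *: x + y) = k * f x + f y) /\
  sn_continuous (normfam E) (fun _ (t : K) => `|t|) f.

(* Continuous derivation D : A -> E^*, with the dual bimodule structure
   (a.f)(x) = f(x.a),  (f.a)(x) = f(a.x), and E^* carrying its norm topology. *)
Definition cont_derivation (A : lmodType K) (mul : A -> A -> A)
  (p : nat -> A -> K) (E : completeNormedModType K)
  (lact : A -> E -> E) (ract : E -> A -> E) (D : A -> E -> K) : Prop :=
  [/\ (forall a, in_dual (D a)),
      (forall (k : K) a b x, D (k *: a + b) x = k * D a x + D b x),
      (forall a b x, D (mul a b) x = D b (ract x a) + D a (lact b x)) &
      (forall a (eps : K), 0 < eps -> exists n : nat, exists2 delta : K, 0 < delta &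
         forall b, p n (b - a) < delta -> forall x, `|D b x - D a x| <= eps * `|x|)].

Definition amenable_modulo (A : lmodType K) (mul : A -> A -> A)
  (p : nat -> A -> K) (I : set A) : Prop :=
  forall (E : completeNormedModType K) (lact : A -> E -> E) (ract : E -> A -> E),
    banach_bimodule mul p lact ract ->
    (forall i x, I i -> lact i x = 0 /\ ract x i = 0) ->
    forall D : A -> E -> K, cont_derivation mul p lact ract D ->
    exists2 eta : E -> K, in_dual eta &
      forall a, ~ I a -> forall x, D a x = eta (ract x a) - eta (lact a x).

Definition cont_homomorphism (A B : lmodType K) (mA : A -> A -> A) (mB : B -> B -> B)
  (p : nat -> A -> K) (q : nat -> B -> K) (phi : A -> B) : Prop :=
  [/\ (forall (k : K) a b, phi (k *: a + b) = k *: phi a + phi b),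
      (forall a b, phi (mA a b) = mB (phi a) (phi b)) &
      sn_continuous p q phi].

Definition dense_range (A B : lmodType K) (q : nat -> B -> K) (phi : A -> B) : Prop :=
  forall (b : B) (m : nat) (eps : K), 0 < eps -> exists a : A, q m (phi a - b) < eps.

End Frechet.

(* Main.v *)
Require Import Defs.
From mathcomp Require Import all_boot all_order all_algebra.
From mathcomp Require Import boolp classical_sets topology normedtype.
From mathcomp Require Import ring.
Import Order.TTheory GRing.Theory Num.Theory.
Local Open Scope classical_set_scope.
Local Open Scope ring_scope.
Set Implicit Arguments. Unset Strict Implicit.

Lemma sn_comp (K : numFieldType) (X Y Z : zmodType) (p : nat -> X -> K)
  (q : nat -> Y -> K) (r : nat -> Z -> K) (f : X -> Y) (g : Y -> Z) :
  sn_continuous p q f -> sn_continuous q r g -> sn_continuous p r (fun x => g (f x)).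
Proof.
move=> cf cg x m eps eps0.
have [n1 [d1 d10 H1]] := cg (f x) m eps eps0.
have [n [d d0 H]] := cf x n1 d1 d10.
exists n; exists d => // y hy; exact: H1 (H y hy).
Qed.

Lemma mono_fam (K : numFieldType) (X : Type) (p : nat -> X -> K) :
  (forall n x, p n x <= p n.+1 x) -> forall n m x, (n <= m)%N -> p n x <= p m x.
Proof.
move=> hp n m x; elim: m => [|m IH].
  by rewrite leqn0 => /eqP ->.
rewrite leq_eqVlt => /orP [/eqP -> //| ]; rewrite ltnS => /IH h.
exact: le_trans h (hp _ _).
Qed.

Lemma pos_lb (K : numFieldType) (a b : K) : 0 < a -> 0 < b ->
  exists2 c : K, 0 < c & c <= a /\ c <= b.
Proof.
move=> a0 b0; case/orP: (real_leVge (gtr0_real a0) (gtr0_real b0)) => h.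
  by exists a.
by exists b.
Qed.

Lemma zero_of_small (K : numFieldType) (z : K) :
  (forall e : K, 0 < e -> `|z| < e *+ 3) -> z = 0.
Proof.
move=> H; apply/eqP; apply/negPn/negP => nz.
have z0 : 0 < `|z| by rewrite normr_gt0.
have e0 : 0 < `|z| / 3%:R by rewrite divr_gt0 // ltr0n.
have := H _ e0; rewrite -[_ *+ 3]mulr_natr divfK ?pnatr_eq0 // ltxx.
by [].
Qed.

Theorem proposition2p2 (K : numFieldType)
  (A : lmodType K) (mA : A -> A -> A) (p : nat -> A -> K)
  (B : lmodType K) (mB : B -> B -> B) (q : nat -> B -> K)
  (hA : is_frechet_algebra mA p) (hB : is_frechet_algebra mB q)
  (I : set A) (J : set B)
  (hI : closed_ideal mA p I) (hJ : closed_ideal mB q J)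
  (amenA : amenable_modulo mA p I)
  (phi : A -> B) (hphi : cont_homomorphism mA mB p q phi)
  (dphi : dense_range q phi) (phiIJ : phi @` I `<=` J) :
  amenable_modulo mB q J.
Proof.
case: hphi => philin phimul phicont.
case: hB => _ [q0 qD qZ _ qmono] _ _.
case: hJ => _ _ _ Jcl.
move=> E lact ract bim triv D cD.
have bim' : banach_bimodule mA p (fun a x => lact (phi a) x) (fun x a => ract x (phi a)).
  case: bim => [[l1 l2] [r1 r2] [m1 m2 m3] [c1 c2] [c3 c4]].
  split.
  - by split=> *; rewrite ?philin ?l1 ?l2.
  - by split=> *; rewrite ?philin ?r1 ?r2.
  - by split=> *; rewrite ?phimul ?m1 ?m2 ?m3.
  - split=> [a|x]; first exact: c1.
    by have /= := sn_comp phicont (c2 x).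
  - split=> [a|x]; first exact: c3.
    by have /= := sn_comp phicont (c4 x).
have triv' : forall i x, I i -> lact (phi i) x = 0 /\ ract x (phi i) = 0.
  by move=> i x Ii; apply: triv; apply: phiIJ; exists i.
have cD' : cont_derivation mA p (fun a x => lact (phi a) x) (fun x a => ract x (phi a))
   (fun a => D (phi a)).
  case: cD => d1 d2 d3 d4; split.
  - by move=> a; exact: d1.
  - by move=> k a b x; rewrite philin d2.
  - by move=> a b x; rewrite phimul d3.
  - move=> a eps eps0.
    have [n [d d0 Hd]] := d4 (phi a) eps eps0.
    have [n' [d' d'0 Hd']] := phicont a n d d0.
    by exists n'; exists d' => // b hb; apply: Hd; apply: Hd'.
have [eta [etalin etac] Heta] := amenA E _ _ bim' triv' _ cD'.
exists eta; first by [].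
move=> b nJb x.
case: bim => _ _ _ [_ c2] [_ c4].
case: cD => _ _ _ d4.
apply/eqP; rewrite -subr_eq0; apply/eqP; apply: zero_of_small => e e0.
have ex0 : 0 < e / (`|x| + 1) by rewrite divr_gt0 // ltr_wpDl.
have [n1 [d1 d10 H1]] := d4 b _ ex0.
have [n2 [d2 d20 H2]] := (sn_comp (c4 x) etac) b 0%N e e0.
have [n3 [d3 d30 H3]] := (sn_comp (c2 x) etac) b 0%N e e0.
have : ~ (forall n (eps : K), 0 < eps -> exists2 y, J y & q n (b - y) < eps).
  by move=> h; apply: nJb; apply: Jcl.
move=> /existsNP [n4] /existsNP [d4' /not_implyP [d40 Hn4]].
have [c12 c120 [c121 c122]] := pos_lb d10 d20.
have [c34 c340 [c341 c342]] := pos_lb d30 d40.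
have [c c0 [cc1 cc2]] := pos_lb c120 c340.
have [a ha] := dphi b (n1 + n2 + n3 + n4)%N c c0.
have hle : forall k, (k <= n1 + n2 + n3 + n4)%N -> q k (phi a - b) < c.
  by move=> k hk; apply: le_lt_trans ha; apply: mono_fam.
have nIa : ~ I a.
  move=> Ia; apply: Hn4; exists (phi a); first by apply: phiIJ; exists a.
  have -> : b - phi a = (-1) *: (phi a - b) by rewrite scaleN1r opprB.
  rewrite qZ normrN1 mul1r; apply: lt_le_trans (hle _ _) _; first by rewrite leq_addl.
  exact: le_trans cc2 c342.
have hD := H1 (phi a) _ x.
have h2 := H2 (phi a).
have h3 := H3 (phi a).
rewrite /normfam in h2 h3.
have hn1 : (n1 <= n1 + n2 + n3 + n4)%N by rewrite -!addnA leq_addr.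
have hn2 : (n2 <= n1 + n2 + n3 + n4)%N by rewrite -addnA -addnA addnC -!addnA leq_addr.
have hn3 : (n3 <= n1 + n2 + n3 + n4)%N by rewrite addnC addnA leq_addl.
have {}hD := hD (lt_le_trans (hle _ hn1) (le_trans cc1 c121)).
have {}h2 := h2 (lt_le_trans (hle _ hn2) (le_trans cc1 c122)).
have {}h3 := h3 (lt_le_trans (hle _ hn3) (le_trans cc2 c341)).
have hx : e / (`|x| + 1) * `|x| <= e.
  rewrite mulrAC ler_pdivrMr ?ltr_wpDl //.
  by rewrite ler_wpM2l ?ltW // ltrDl ltr01.
have {}hD := le_trans hD hx.
set u := D (phi a) x - D b x in hD.
set v := eta (ract x (phi a)) - eta (ract x b) in h2.
set w := eta (lact (phi a) x) - eta (lact b x) in h3.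
have -> : D b x - (eta (ract x b) - eta (lact b x)) = - u + v - w.
  rewrite /u /v /w Heta //; ring.
apply: (le_lt_trans (ler_normB _ _)).
rewrite mulrS mulrS mulr1n addrA.
apply: ltrD; last by [].
apply: (le_lt_trans (ler_normD _ _)).
by rewrite normrN; apply: ler_ltD.
Qed.
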